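(* Let $n,d,m$ be positive integers with $d$ odd and $\delta=n/d$ a positive integer, and let $X\in\mathbb{R}^{m\times n}$ be any matrix whose $k$-th row is the data vector $\mathbf{x}^{(0,k)}$, $k=1,\dots,m$. Consider the 1-hidden layer treelike committee machine sign perceptron network $A([n,d,1];\mathrm{sign})$, and the data set $(\mathbf{x}^{(0,k)},1)_{k=1}^m$ (all labels equal to $1$). For $j=1,\dots,d$ let $\mathcal{S}^{(j)}=\{(j-1)\delta+1,\dots,j\delta\}$ and $X^{(j)}=X_{:,\mathcal{S}^{(j)}}\in\mathbb{R}^{m\times\delta}$. Define $$f_{rp}(X)=\frac{1}{\sqrt n}\min_{\mathbf{z}^{(j)}\in\mathbb{R}^\delta,\ \|\mathbf{z}^{(j)}\|_2=1\ (1\le j\le d),\ Q\in\mathbb{R}^{m\times d}}\ \max_{\Lambda\in\mathbb{R}^{m\times d}}\Big(\|\mathbf{1}-\mathrm{sign}(\mathrm{sign}(Q)\mathbf{1})\|_2+\sum_{j=1}^d(\Lambda_{:,j})^TX^{(j)}\mathbf{z}^{(j)}-\mathrm{tr}(\Lambda^TQ)\Big).$$ If $f_{rp}(X)>0$, then the data set $(\mathbf{x}^{(0,k)},1)_{k=1}^m$ cannot be properly memorized by the network.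
   Context: The network $A([n,d,1];\mathrm{sign})$ (treelike committee machine, TCM): an input $\mathbf{x}\in\mathbb{R}^n$ is mapped to the output $\mathrm{sign}(\mathbf{1}^T\mathrm{sign}(W\mathbf{x}))$, where $\mathbf{1}$ is the all-ones vector, $\mathrm{sign}$ acts componentwise, and $W\in\mathbb{R}^{d\times n}$ is a weight matrix with treelike sparsity: the nonzero entries of row $j$ of $W$ lie only in the columns $\mathcal{S}^{(j)}=\{(j-1)\delta+1,\dots,j\delta\}$. The data set $(\mathbf{x}^{(0,k)},y^{(0,k)})_{k=1}^m$ is properly memorized if there exists such a $W$ with $\mathrm{sign}(\mathbf{1}^T\mathrm{sign}(W\mathbf{x}^{(0,k)}))=y^{(0,k)}$ for all $k$. For a matrix $Q$, $\mathrm{sign}(Q)$ is applied entrywise and $\mathrm{sign}(Q)\mathbf{1}$ is the vector of row sums of $\mathrm{sign}(Q)$; $\Lambda_{:,j}$ denotes the $j$-th column of $\Lambda$. *)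

(* Defs.v *)
From HB Require Import structures.
From mathcomp Require Import all_boot all_order all_algebra.
From mathcomp Require Import boolp classical_sets reals constructive_ereal ereal.
Set Implicit Arguments. Unset Strict Implicit. Unset Printing Implicit Defensive.
Import Order.TTheory GRing.Theory Num.Theory.
Local Open Scope ring_scope.
Local Open Scope classical_set_scope.

(* sign convention: sgn x = 1 if x > 0, and -1 otherwise (so sgn 0 = -1) *)
Definition sgn {R : realType} (x : R) : R := if 0 < x then 1 else -1.

(* Index (j-1)*delta + i (0-based: j*delta + i) of block j, position i. *)
Lemma blk_idx_proof (d dl : nat) (j : 'I_d) (i : 'I_dl) : (j * dl + i < d * dl)%N.
Proof.
have Hi := ltn_ord i; have Hj := ltn_ord j.
apply: (leq_trans (_ : _ < j * dl + dl)%N); first by rewrite ltn_add2l.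
by rewrite -[(j * dl + dl)%N]mulSnr leq_mul2r Hj orbT.
Qed.
Definition blk_idx (d dl : nat) (j : 'I_d) (i : 'I_dl) : 'I_(d * dl) :=
  Ordinal (blk_idx_proof j i).

Definition blockX {R : realType} (m d dl : nat) (X : 'M[R]_(m, d * dl)) (j : 'I_d)
  : 'M[R]_(m, dl) := \matrix_(k < m, i < dl) X k (blk_idx j i).

Definition treelike {R : realType} (d dl : nat) (W : 'M[R]_(d, d * dl)) : Prop :=
  forall (j : 'I_d) (c : 'I_(d * dl)), (forall i : 'I_dl, c != blk_idx j i) -> W j c = 0.

Definition tcm_out {R : realType} (d dl : nat) (W : 'M[R]_(d, d * dl))
  (x : 'cV[R]_(d * dl)) : R :=
  sgn (\sum_(j < d) sgn ((W *m x) j 0)).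

Definition properly_memorized {R : realType} (m d dl : nat)
  (X : 'M[R]_(m, d * dl)) (y : 'I_m -> R) : Prop :=
  exists W : 'M[R]_(d, d * dl), treelike W /\
    forall k : 'I_m, tcm_out W (row k X)^T = y k.

Definition sign_err {R : realType} (m d : nat) (Q : 'M[R]_(m, d)) : R :=
  Num.sqrt (\sum_(k < m) (1 - sgn (\sum_(j < d) sgn (Q k j))) ^+ 2).

Definition frp_obj {R : realType} (m d dl : nat) (X : 'M[R]_(m, d * dl))
  (z : 'I_d -> 'cV[R]_dl) (Q L : 'M[R]_(m, d)) : R :=
  sign_err Q
  + \sum_(j < d) ((col j L)^T *m blockX X j *m z j) 0 0
  - \tr (L^T *m Q).

Definition unit_norm {R : realType} (dl : nat) (v : 'cV[R]_dl) : Prop :=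
  Num.sqrt (\sum_(i < dl) v i 0 ^+ 2) = 1.

(* f_rp(X), with min/max read as inf/sup in the extended reals *)
Definition f_rp {R : realType} (m d dl : nat) (X : 'M[R]_(m, d * dl)) : \bar R :=
  ((Num.sqrt ((d * dl)%:R : R))^-1)%:E *
  ereal_inf [set e | exists (z : 'I_d -> 'cV[R]_dl) (Q : 'M[R]_(m, d)),
      (forall j, unit_norm (z j)) /\
      e = ereal_sup [set (frp_obj X z Q L)%:E | L in [set: 'M[R]_(m, d)]]].

(* Main.v *)
Require Import Defs.
From HB Require Import structures.
From mathcomp Require Import all_boot all_order all_algebra.
From mathcomp Require Import boolp classical_sets reals constructive_ereal ereal.
Import Order.TTheory GRing.Theory Num.Theory.
Local Open Scope ring_scope.

Lemma sgn_mono (R : realType) (a b : R) : (0 < b -> 0 < a) -> sgn b <= sgn a.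
Proof.
rewrite /sgn; case: (ltP 0 b) => hb H.
  by rewrite H.
by case: ifP => _; rewrite ?lexx //; apply: (@le_trans _ _ 0); rewrite ?oppr_le0 ?ler01.
Qed.

Lemma sgn1 (R : realType) (a : R) : sgn a = 1 -> 0 < a.
Proof.
rewrite /sgn; case: ifP => // _ h.
have : (0 : R) < 1 by exact: ltr01.
by rewrite -h oppr_gt0 ltNge ler01.
Qed.

Lemma blk_inj (d dl : nat) (j : 'I_d) : injective (@blk_idx d dl j).
Proof.
move=> i i' /(congr1 val) /= /eqP; rewrite eqn_add2l => /eqP h.
exact: val_inj.
Qed.

Lemma Wx_eq (R : realType) (m d dl : nat) (X : 'M[R]_(m, d * dl))
  (W : 'M[R]_(d, d * dl)) (hW : treelike W) (k : 'I_m) (j : 'I_d) :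
  (W *m (row k X)^T) j 0 =
  (blockX X j *m (\col_i W j (blk_idx j i))) k 0.
Proof.
rewrite !mxE.
pose S := [set blk_idx j i | i : 'I_dl].
rewrite (bigID (fun c => c \in S)) /= [X in _ + X]big1 ?addr0; last first.
  move=> c hc; rewrite hW ?mul0r // => i; apply/negP => /eqP hci.
  by move/negP: hc; apply; rewrite hci; apply/imsetP; exists i.
rewrite big_imset /=; last by move=> i i' _ _; apply: blk_inj.
apply: eq_bigr => i _; rewrite !mxE mulrC; done.
Qed.

Local Open Scope classical_set_scope.

Theorem lemma1 (R : realType) (n d dl m : nat)
  (hn : (0 < n)%N) (hd : (0 < d)%N) (hdodd : odd d) (hdl : (0 < dl)%N)
  (hm : (0 < m)%N) (hndl : n = (d * dl)%N) (X : 'M[R]_(m, d * dl)) :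
  (0 < f_rp X)%E -> ~ properly_memorized X (fun _ => 1).
Proof.
move=> hpos [W [hW hmem]].
pose wv (j : 'I_d) : 'cV[R]_dl := \col_i W j (blk_idx j i).
pose nrm (j : 'I_d) : R := Num.sqrt (\sum_(i < dl) wv j i 0 ^+ 2).
pose i0 : 'I_dl := Ordinal hdl.
pose e0 : 'cV[R]_dl := \col_i (i == i0)%:R.
pose z (j : 'I_d) : 'cV[R]_dl := if nrm j == 0 then e0 else (nrm j)^-1 *: wv j.
pose Q : 'M[R]_(m, d) := \matrix_(k, j) (blockX X j *m z j) k 0.
have hz : forall j, unit_norm (z j).
  move=> j; rewrite /unit_norm /z; case: ifP => h0.
    rewrite (bigD1 i0) //= big1 ?addr0; first by rewrite !mxE eqxx expr1n sqrtr1.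
    by move=> i /negbTE hi; rewrite !mxE hi expr0n.
  have hn0 : 0 < nrm j by rewrite lt_def h0 sqrtr_ge0.
  under eq_bigr => i _ do rewrite !mxE exprMn.
  rewrite -mulr_sumr sqrtrM ?sqr_ge0 // sqrtr_sqr.
  rewrite ger0_norm ?invr_ge0 ?ltW //.
  have -> : Num.sqrt (\sum_i W j (blk_idx j i) ^+ 2) = nrm j.
    by rewrite /nrm; congr Num.sqrt; apply: eq_bigr => i _; rewrite mxE.
  by rewrite mulVf ?h0.
have hsig : forall k j, 0 < (W *m (row k X)^T) j 0 -> 0 < Q k j.
  move=> k j; rewrite (@Wx_eq R m d dl X W hW k j).
  have -> : Q k j = (blockX X j *m z j) k 0 by rewrite mxE.
  have -> : z j = if nrm j == 0 then e0 else (nrm j)^-1 *: wv j by [].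
  case: ifP => h0.
    move: h0; rewrite /nrm sqrtr_eq0 => hle.
    have hs : \sum_(i < dl) wv j i 0 ^+ 2 = 0.
      by apply/eqP; rewrite eq_le hle sumr_ge0 // => i _; rewrite sqr_ge0.
    have hw : wv j = 0.
      apply/matrixP => i c; rewrite (ord1 c) mxE.
      have /eqP := psumr_eq0P (fun i _ => sqr_ge0 _) hs (i:=i) isT.
      by rewrite mxE sqrf_eq0 => /eqP ->; rewrite mxE.
    by rewrite -/(wv j) hw mulmx0 mxE ltxx.
  have hn0 : 0 < nrm j by rewrite lt_def h0 sqrtr_ge0.
  move=> hp; rewrite -scalemxAr mxE mulr_gt0 // ?invr_gt0 //.
have hQ : forall k, sgn (\sum_(j < d) sgn (Q k j)) = 1.
  move=> k; rewrite /sgn ifT //.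
  have h1 : 0 < \sum_(j < d) sgn ((W *m (row k X)^T) j 0) by apply: sgn1; exact: hmem.
  apply: (lt_le_trans h1).
  by apply: ler_sum => j _; apply: sgn_mono; apply: hsig.
have herr : sign_err Q = 0.
  rewrite /sign_err big1 ?sqrtr0 // => k _; by rewrite hQ subrr expr0n.
have hobj : forall L, frp_obj X z Q L = 0.
  move=> L; rewrite /frp_obj herr add0r /mxtrace.
  apply/eqP; rewrite subr_eq0; apply/eqP; apply: eq_bigr => j _.
  rewrite -mulmxA !mxE; apply: eq_bigr => k _; rewrite !mxE.
  done.
have hsup : ereal_sup [set (frp_obj X z Q L)%:E | L in [set: 'M[R]_(m, d)]] = 0%E.
  rewrite (_ : [set _ | L in _] = [set 0%E]) ?ereal_sup1 //.
  apply/seteqP; split => x /=.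
    by case=> L _ <-; rewrite hobj.
  by move=> ->; exists (0 : 'M[R]_(m, d)) => //; rewrite hobj.
have hinf : (ereal_inf [set e | exists (z : 'I_d -> 'cV[R]_dl) (Q : 'M[R]_(m, d)),
      (forall j, unit_norm (z j)) /\
      e = ereal_sup [set (frp_obj X z Q L)%:E | L in [set: 'M[R]_(m, d)]]] <= 0)%E.
  by apply: ereal_inf_lbound; exists z, Q; split => //; rewrite hsup.
have : (f_rp X <= 0)%E.
  by apply: mule_ge0_le0 => //; rewrite lee_fin invr_ge0 sqrtr_ge0.
by rewrite leNgt hpos.
Qed.
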